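(* Let $\mathcal{X}$ have exactly two elements, so that $\mathscr{V}=\mathbb{R}^2$ with the componentwise order. For every $A\in\mathscr{Q}$ there is an option set $B\subseteq A$ with at most two elements such that $\{A\}$ is equivalent to $\{B\}$. Moreover, such a $B$ can be obtained from $A$ by finitely many successive removal steps, each of which replaces the current set $A'$ by $A'\setminus\{u\}$ for some $u\in A'$ for which there exist $v\in A'$ with $v\neq u$ and a real $\mu\ge0$ such that $u\le\mu v$.
   Context: Let $\mathscr{V}$ be a real vector space of functions $\mathcal X\to\mathbb{R}$ with pointwise operations; for $u,v\in\mathscr{V}$, $u\le v$ iff $u(x)\le v(x)$ for all $x$, and $u<v$ iff $u\le v$ and $u\neq v$. Let $\mathscr{V}_{>0}=\{u\in\mathscr{V}:0<u\}$ and $\mathscr{V}^s_{>0}=\{\{u\}:u\in\mathscr{V}_{>0}\}$. Let $\mathscr{Q}$ be the set of all finite subsets of $\mathscr{V}$ (including $\emptyset$). For a positive integer $n$, $\mathbb{R}^{n,+}=\{\boldsymbol\lambda\in\mathbb{R}^n:\lambda_j\ge0\ \forall j,\ \sum_j\lambda_j>0\}$, and for $\boldsymbol\lambda\in\mathbb{R}^n$, $\mathbf u=(u_1,\dots,u_n)\in\mathscr{V}^n$, $\boldsymbol\lambda\mathbf u=\sum_{j=1}^n\lambda_ju_j$. A set of desirable option sets is any $K\subseteq\mathscr{Q}$. It is coherent if for all $A,B\in K$: (K0) $A\setminus\{0\}\in K$; (K1) $\{0\}\notin K$; (K2) $\mathscr{V}^s_{>0}\subseteq K$; (K3) $\{\boldsymbol\lambda(\mathbf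 u)\mathbf u:\mathbf u\in A\times B\}\in K$ for every map $\boldsymbol\lambda:A\times B\to\mathbb{R}^{2,+}$; (K4) $A\cup Q\in K$ for all $Q\in\mathscr{Q}$. $\bar{\mathbf K}$ denotes the set of coherent sets of desirable option sets. An assessment is any subset $\mathcal{A}\subseteq\mathscr{Q}$; $\bar{\mathbf K}(\mathcal A)=\{K\in\bar{\mathbf K}:\mathcal A\subseteq K\}$. Two assessments $\mathcal A_1,\mathcal A_2$ are called equivalent if $\bar{\mathbf K}(\mathcal A_1)=\bar{\mathbf K}(\mathcal A_2)$. *)

(* Defs.v *)
From HB Require Import structures.
From mathcomp Require Import all_boot all_order all_algebra.
From mathcomp Require Import boolp classical_sets cardinality reals.
Set Implicit Arguments. Unset Strict Implicit. Unset Printing Implicit Defensive.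
Import Order.TTheory GRing.Theory Num.Theory.
Local Open Scope classical_set_scope.
Local Open Scope ring_scope.

Section Defs.
Variables (X : Type) (R : realType).

Definition opt := X -> R.
Definition opt0 : opt := fun _ => 0.
Definition lincomb (a b : R) (u v : opt) : opt := fun x => a * u x + b * v x.
Definition scal (a : R) (u : opt) : opt := fun x => a * u x.

Definition ole (u v : opt) : Prop := forall x, u x <= v x.
Definition olt (u v : opt) : Prop := ole u v /\ u <> v.

Definition Qsets : set (set opt) := [set A | finite_set A].

(* lambda : A x B -> R^{2,+}, given as a (total) map whose values on A x B
   are constrained *)
Definition R2plus (l : R * R) : Prop := 0 <= l.1 /\ 0 <= l.2 /\ 0 < l.1 + l.2.

Definition coherent (K : set (set opt)) : Prop :=
  K `<=` Qsets /\
  (* K0 *) (forall A, K A -> K (A `\ opt0)) /\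
  (* K1 *) ~ K [set opt0] /\
  (* K2 *) (forall u, olt opt0 u -> K [set u]) /\
  (* K3 *) (forall A B, K A -> K B ->
              forall lam : opt -> opt -> R * R,
              (forall u v, A u -> B v -> R2plus (lam u v)) ->
              K [set w | exists u v, A u /\ B v /\
                          w = lincomb (lam u v).1 (lam u v).2 u v]) /\
  (* K4 *) (forall A Q, K A -> Qsets Q -> K (A `|` Q)).

Definition Kbar (As : set (set opt)) : set (set (set opt)) :=
  [set K | coherent K /\ As `<=` K].

Definition equivalent (A1 A2 : set (set opt)) : Prop := Kbar A1 = Kbar A2.

Definition remove_step (A A' : set opt) : Prop :=
  exists u, A u /\
    (exists v mu, A v /\ v <> u /\ 0 <= mu /\ ole u (scal mu v)) /\
    A' = A `\ u.

Inductive removal_steps : set opt -> set opt -> Prop :=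
| rs_refl A : removal_steps A A
| rs_step A A' A'' : remove_step A A' -> removal_steps A' A'' ->
                     removal_steps A A''.
End Defs.

(* Main.v *)
Require Import Defs.
From HB Require Import structures.
From mathcomp Require Import all_boot all_order all_algebra.
From mathcomp Require Import boolp classical_sets cardinality reals.
Local Open Scope classical_set_scope.
Import Order.TTheory GRing.Theory Num.Theory.
Local Open Scope classical_set_scope.
Local Open Scope ring_scope.
Set Implicit Arguments. Unset Strict Implicit.

Section Comb.
Variables (X : Type) (R : realType) (x y : X).
Hypothesis hxy : forall z, z = x \/ z = y.

Lemma two_pt_aux (p q : opt X R) : 0 < p x -> 0 < q x ->
  q y * p x <= p y * q x -> exists mu, 0 <= mu /\ ole q (scal mu p).
Proof.
move=> px qx h; exists (q x / p x); split; first by rewrite divr_ge0 // ltW.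
rewrite /ole /scal => z; case: (hxy z) => ->.
  by rewrite mulfVK ?gt_eqF.
by rewrite mulrAC ler_pdivlMr // [q x * _]mulrC.
Qed.

Lemma two_pt (p q : opt X R) : 0 < p x -> 0 < q x ->
  (exists mu, 0 <= mu /\ ole q (scal mu p)) \/ (exists mu, 0 <= mu /\ ole p (scal mu q)).
Proof.
move=> px qx; case: (leP (q y * p x) (p y * q x)) => h.
  by left; apply: two_pt_aux.
by right; apply: two_pt_aux => //; exact: ltW.
Qed.
End Comb.

Definition good (X : Type) (R : realType) (S : set (opt X R)) :=
  exists u v mu, S u /\ S v /\ v <> u /\ 0 <= mu /\ ole u (scal mu v).

Lemma three_pt (X : Type) (R : realType) (x y : X) (hxy : forall z, z = x \/ z = y)
  (a b c : opt X R) : a <> b -> a <> c -> b <> c ->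
  good [set a; b; c].
Proof.
move=> ab ac bc.
have np : forall p q : opt X R, p <> q -> [set a; b; c] p -> [set a; b; c] q ->
   p x <= 0 -> p y <= 0 -> good [set a; b; c].
  move=> p q pq Sp Sq h1 h2; exists p, q, 0; split; [done|split; [done|split; [by auto|split]]] => //.
  by move=> z; rewrite /scal mul0r; case: (hxy z) => ->.
have tp : forall (w : X) p q, p <> q -> [set a; b; c] p -> [set a; b; c] q ->
   0 < p w -> 0 < q w -> good [set a; b; c].
  move=> w p q pq Sp Sq h1 h2.
  have hw : forall z, z = w \/ z = (if `[< w = x >] then y else x).
    move=> z; case: asboolP => [->|wx]; first exact: hxy.
    case: (hxy w) => wE; first by [].
    by rewrite wE; case: (hxy z) => ->; auto.
  case: (two_pt hw h1 h2) => [[mu [m0 h]]|[mu [m0 h]]].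
    by exists q, p, mu; split; [done|split; [done|split; [by auto|split]]].
  by exists p, q, mu; split; [done|split; [done|split; [by auto|split]]].
have Sa : [set a; b; c] a by left; left.
have Sb : [set a; b; c] b by left; right.
have Sc : [set a; b; c] c by right.
have cls : forall p : opt X R, (p x <= 0 /\ p y <= 0) \/ 0 < p x \/ 0 < p y.
  move=> p; case: (leP (p x) 0) => h1; case: (leP (p y) 0) => h2; by [left | right; left | right; right].
case: (cls a) => [[]|[]ha]; first exact: np Sa Sb.
- case: (cls b) => [[]|[]hb]; first by apply: np Sb Sa => // /esym.
  + exact: tp ha hb.
  + case: (cls c) => [[]|[]hc]; first by apply: np Sc Sa => // /esym.
    * exact: tp ha hc.
    * exact: tp hb hc.
- case: (cls b) => [[]|[]hb]; first by apply: np Sb Sa => // /esym.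
  + case: (cls c) => [[]|[]hc]; first by apply: np Sc Sa => // /esym.
    * exact: tp hb hc.
    * exact: tp ha hc.
  + exact: tp ha hb.
Qed.
Section Rem.
Variables (X : Type) (R : realType) (K : set (set (opt X R))).
Hypothesis cK : coherent K.

Lemma K_sup (S T : set (opt X R)) : K S -> S `<=` T -> Qsets T -> K T.
Proof.
move: cK => [_ [_ [_ [_ [_ K4]]]]] KS ST QT.
by rewrite -(setUidr ST); apply: K4.
Qed.

Lemma K_map (A D : set (opt X R)) (lam : opt X R -> opt X R -> R * R) T :
  K A -> K D -> (forall u v, A u -> D v -> R2plus (lam u v)) ->
  (forall u v, A u -> D v -> T (lincomb (lam u v).1 (lam u v).2 u v)) ->
  Qsets T -> K T.
Proof.
move=> KA KD hl hT QT; move: (cK) => [_ [_ [_ [_ [K3 _]]]]].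
apply: K_sup (K3 _ _ KA KD lam hl) _ QT.
by move=> w [u [v [Au [Dv ->]]]]; apply: hT.
Qed.

Lemma remove_ok (A A' : set (opt X R)) : K A -> remove_step A A' -> K A'.
Proof.
move=> KA [u [Au [[v [mu [Av [vu [mu0 hle]]]]] ->]]].
have QA : Qsets (A `\ u).
  by apply: finite_setD; move: cK => [sub _]; exact: sub.
have [K0 [_ [K2 _]]] : (forall A, K A -> K (A `\ @opt0 X R)) /\ True /\
   (forall u, olt (@opt0 X R) u -> K [set u]) /\ True.
  by move: cK => [_ [K0 [_ [K2 _]]]].
have Av' : (A `\ u) v by split.
have sel : forall (a b : R * R) (w : opt X R),
  R2plus a -> R2plus b -> R2plus (if `[< w = u >] then a else b).
  by move=> a b w ha hb; case: asboolP.
have ps : forall a b : R, 0 < a -> 0 < b -> R2plus (a, b).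
  by move=> a b ha hb; split; [exact: ltW|split; [exact: ltW|exact: addr_gt0]].
have R10 : R2plus (1, 0) by split => //=; rewrite addr0.
have h1 : forall w (a : R * R), A w -> (A `\ u) (if `[< w = u >] then lincomb a.1 a.2 w w else w) \/ w = u.
  by move=> w a Aw; case: asboolP => wu; [right|left].
case: (eqVneq mu 0) => [mu_eq0|mu_neq0].
-
  have u_le0 : ole u (@opt0 X R).
    by move=> z; have := hle z; rewrite /scal mu_eq0 mul0r.
  case: (pselect (u = @opt0 X R)) => [u0|u0]; first by rewrite u0; apply: K0.
  set d : opt X R := fun z => - u z.
  have Kd : K [set d].
    apply: K2; split; first by move=> z; rewrite /d /opt0 oppr_ge0; apply: u_le0.
    move=> d0; apply: u0; apply: funext => z.
    by have := congr1 (fun f => f z) d0; rewrite /d /opt0 => /esym /eqP; rewrite oppr_eq0 => /eqP.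
  have KC := K_map (T := (A `\ u) `|` [set @opt0 X R])
     (lam := fun w _ => if `[< w = u >] then (1, 1) else (1, 0)) KA Kd.
  apply: K_sup (K0 _ (KC _ _ _)) _ (QA).
  + by move=> w e _ _; apply: sel => //; apply: ps; exact: ltr01.
  + move=> w e Aw ->; case: asboolP => wu.
      right; apply: funext => z; rewrite /lincomb /d /opt0 /= wu !mul1r.
      by rewrite subrr.
    suff -> : lincomb 1 0 w d = w by left; split.
    by apply: funext => z; rewrite /lincomb /= mul1r mul0r addr0.
  + rewrite /Qsets /= finite_setU; split; [exact: QA|exact: finite_set1].
  + by move=> w [[]].
- have mu_gt0 : 0 < mu by rewrite lt0r mu_neq0.
  case: (pselect (u = scal mu v)) => [uE|uE].
  + apply: (K_map (lam := fun w _ => if `[< w = u >] then ((mu^-1), 0) else (1, 0)) KA KA _ _ QA).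
      move=> w e _ _; apply: sel => //; split; first by rewrite /= invr_ge0 ltW.
      by split => //=; rewrite addr0 invr_gt0.
    move=> w e Aw _; case: asboolP => wu /=.
      suff -> : lincomb mu^-1 0 w e = v by [].
      apply: funext => z; rewrite /lincomb wu uE /scal mul0r addr0 mulrA mulVf //.
      by rewrite mul1r.
    suff -> : lincomb 1 0 w e = w by split.
    by apply: funext => z; rewrite /lincomb mul1r mul0r addr0.
  + set d : opt X R := fun z => mu * v z - u z.
    have Kd : K [set d].
      apply: K2; split; first by move=> z; rewrite /d /opt0 subr_ge0; apply: hle.
      move=> d0; apply: uE; apply: funext => z.
      have := congr1 (fun f => f z) d0; rewrite /d /opt0 /scal => /esym /eqP.
      by rewrite subr_eq0 => /eqP.
    apply: (K_map (lam := fun w _ => if `[< w = u >] then ((mu^-1), (mu^-1)) else (1, 0)) KA Kd _ _ QA).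
      by move=> w e _ _; apply: sel => //; apply: ps; rewrite invr_gt0.
    move=> w e Aw ->; case: asboolP => wu /=.
      suff -> : lincomb mu^-1 mu^-1 w d = v by [].
      apply: funext => z; rewrite /lincomb /d wu -mulrDr addrCA subrr addr0 mulrA mulVf //.
      by rewrite mul1r.
    suff -> : lincomb 1 0 w d = w by split.
    by apply: funext => z; rewrite /lincomb mul1r mul0r addr0.
Qed.
End Rem.
Lemma two_elems (X : finType) : #|X| = 2%N -> exists x y : X, x != y /\ forall z, z = x \/ z = y.
Proof.
move=> hX; have := enum_uniq X; have := mem_enum X; have := cardT X; rewrite hX.
case: (enum X) => [|x [|y [|? ?]]] //= _ mem; rewrite andbT inE => xy.
exists x, y; split => // z; have := mem z; rewrite !inE /= => /orP[]/eqP->; tauto.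
Qed.

Lemma steps_sub (X : Type) (R : realType) (A B : set (opt X R)) :
  removal_steps A B -> B `<=` A.
Proof.
elim=> {A B} [A|A A' A'' [u [_ [_ ->]]] _ IH]; first by [].
by move=> w /IH [].
Qed.

Lemma steps_K (X : Type) (R : realType) (K : set (set (opt X R))) (A B : set (opt X R)) :
  coherent K -> removal_steps A B -> K A -> K B.
Proof.
move=> cK; elim=> {A B} [//|A A' A'' st _ IH KA].
by apply: IH; apply: remove_ok st.
Qed.

Lemma reduce (X : Type) (R : realType) (x y : X) (hxy : forall z, z = x \/ z = y) :
  forall n (s : seq (opt X R)), uniq s -> (size s <= n)%N ->
  exists B, (exists u v, B `<=` [set u; v]) /\ removal_steps [set` s] B.
Proof.
elim=> [|n IH] s us hs.
  exists [set` s]; split; last exact: rs_refl.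
  by exists (@opt0 X R), (@opt0 X R); move: hs; case: s {us} => //= _ w; rewrite inE.
case: s us hs => [|a [|b [|c t]]] us hs.
- exists [set` [::]]; split; last exact: rs_refl.
  by exists (@opt0 X R), (@opt0 X R) => w /=; rewrite inE.
- exists [set` [:: a]]; split; last exact: rs_refl.
  by exists a, a => w /=; rewrite inE => /eqP ->; left.
- exists [set` [:: a; b]]; split; last exact: rs_refl.
  by exists a, b => w /=; rewrite !inE => /orP[]/eqP ->; [left|right].
- set s := [:: a, b, c & t] in us hs *.
  have ab : a <> b by move=> E; move: us; rewrite /s E cons_uniq in_cons eqxx.
  have ac : a <> c by move=> E; move: us; rewrite /s E cons_uniq !in_cons eqxx orbT.
  have bc : b <> c by move=> E; move: us; rewrite /s E cons_uniq [uniq (_ :: _)]cons_uniq !in_cons eqxx orTb andbF.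
  have [u [v [mu [Su [Sv [vu [mu0 hle]]]]]]] := three_pt hxy ab ac bc.
  have us' : uniq (rem u s) by apply: rem_uniq.
  have uin : u \in s.
    by case: Su => [[]|] ->; rewrite /s !inE eqxx ?orbT.
  have vin : v \in s.
    by case: Sv => [[]|] ->; rewrite /s !inE eqxx ?orbT.
  have hs' : (size (rem u s) <= n)%N by rewrite size_rem.
  have [B [hB st]] := IH _ us' hs'.
  exists B; split => //; apply: rs_step st.
  exists u; split => //; split; first by exists v, mu.
  apply/seteqP; split => w /=; rewrite (mem_rem_uniq _ us) !inE.
    by move=> /andP[/eqP ? ?]; split.
  by move=> [? /eqP ?]; apply/andP; split.
Qed.

Theorem proposition5 (X : finType) (R : realType) (hX : #|X| = 2%N)
  (A : set (opt X R)) :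
  Qsets A ->
  exists B : set (opt X R),
    B `<=` A /\
    (exists u v : opt X R, B `<=` [set u; v]) /\
    equivalent [set A] [set B] /\
    removal_steps A B.
Proof.
move=> QA; have [x [y [_ hxy]]] := two_elems hX.
have [s As] : exists s : seq (opt X R), A = [set` s] by apply/finite_seqP.
have As' : A = [set` undup s].
  by rewrite As; apply/seteqP; split => w /=; rewrite mem_undup.
have [B [hB st]] := reduce hxy (undup_uniq s) (leqnn (size (undup s))).
rewrite -As' in st.
exists B; split; first exact: steps_sub st.
split => //; split => //.
apply/seteqP; split => K [cK sub]; split => // _ ->.
  by apply: steps_K cK st _; apply: sub.
exact: (K_sup cK (sub B erefl) (steps_sub st) QA).
Qed.
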